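(* The complexity measure $M$ is downward non-increasing: for every affine subspace $U\subseteq\mathbb{F}_2^n$, every function $f:U\to\mathbb{F}_2$, and every affine subspace $W\subseteq U$, we have $M(f|_W)\le M(f)$, where $f|_W$ denotes the restriction of $f$ to $W$.
   Context: For an affine subspace $V\subseteq\mathbb{F}_2^n$ with $t=\dim V$ and a function $g:V\to\mathbb{F}_2$, choose an affine map $L:\mathbb{F}_2^t\to\mathbb{F}_2^n$ with $L(\mathbb{F}_2^t)=V$ (so $L$ is a bijection onto $V$), and define $G:(\mathbb{F}_2^t)^4\to\mathbb{F}_2$ by $G(x_1,x_2,x_3,x_4)=g(L(x_1+x_2+x_3+x_4))$. Then $M(g)$ is defined as $\mathrm{CC}_4(G)$; this does not depend on the choice of $L$. Here $\mathrm{CC}_4(G)$ is the deterministic number-in-hand multiparty communication complexity of $G$ in the blackboard model: $4$ players, player $P_i$ holds $x_i$, every message is written on a blackboard visible to all, and $\mathrm{CC}_4(G)$ is the least number of bits communicated in the worst case by a deterministic protocol computing $G$ correctly on all inputs. *)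

(* Defs.v *)
From HB Require Import structures.
From mathcomp Require Import all_boot all_order all_algebra.
From Stdlib Require Import ClassicalEpsilon.
Set Implicit Arguments. Unset Strict Implicit. Unset Printing Implicit Defensive.
Import GRing.Theory.
Local Open Scope ring_scope.

(* PNode i m p0 p1 : player i writes the bit m (x i) on the blackboard (it depends
   on the player's own input; the dependence on the transcript so far is encoded
   by the position in the tree); continue with p0 if the bit is false, p1 if true. *)
Inductive proto (k : nat) (X Y : Type) : Type :=
| PLeaf of Y
| PNode of 'I_k & (X -> bool) & proto k X Y & proto k X Y.

Fixpoint prun k X Y (p : proto k X Y) (x : 'I_k -> X) : Y :=
  match p with
  | PLeaf y => y
  | PNode i m p0 p1 => if m (x i) then prun p1 x else prun p0 x
  end.

Fixpoint plen k X Y (p : proto k X Y) (x : 'I_k -> X) : nat :=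
  match p with
  | PLeaf _ => 0
  | PNode i m p0 p1 => (if m (x i) then plen p1 x else plen p0 x).+1
  end.

Definition computes k (X : finType) Y (p : proto k X Y)
  (G : {ffun 'I_k -> X} -> Y) : Prop :=
  forall x : {ffun 'I_k -> X}, prun p x = G x.

Definition pcost k (X : finType) Y (p : proto k X Y) : nat :=
  (\max_(x : {ffun 'I_k -> X}) plen p x)%N.

Definition CC_le k (X : finType) Y (G : {ffun 'I_k -> X} -> Y) (d : nat) : Prop :=
  exists p : proto k X Y, computes p G /\ (pcost p <= d)%N.

Definition CC_le_b k (X : finType) Y (G : {ffun 'I_k -> X} -> Y) (d : nat) : bool :=
  if excluded_middle_informative (CC_le G d) then true else false.

(* CC_k(G): the least worst-case cost of a protocol computing G
   (the fallback value 0 is never used: a correct protocol always exists). *)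
Definition CC k (X : finType) Y (G : {ffun 'I_k -> X} -> Y) : nat :=
  match excluded_middle_informative (exists d, CC_le_b G d) with
  | left h => ex_minn h
  | right _ => 0%N
  end.

Definition F2vec n := 'rV['F_2]_n.

Definition affine_dim n (V : {set F2vec n}) (t : nat) : Prop :=
  exists (a : F2vec n) (S : {vspace F2vec n}),
    V = [set a + v | v in S] /\ \dim S = t.

Definition affine_subspace n (V : {set F2vec n}) : Prop :=
  exists t, affine_dim V t.

Definition affine_param n t (V : {set F2vec n}) (A : 'M['F_2]_(t, n)) (b : F2vec n)
  : Prop :=
  injective (fun x : F2vec t => x *m A + b) /\
  [set x *m A + b | x : F2vec t] = V.

(* M(g) for g : V -> F_2 (represented as a total function on F_2^n; only its
   values on V matter): CC_4 of G(x1,..,x4) = g(L(x1+x2+x3+x4)) for a chosen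
   affine bijection L : F_2^(dim V) -> V. *)
Definition M n (V : {set F2vec n}) (g : F2vec n -> 'F_2) : nat :=
  match excluded_middle_informative
          (exists t (A : 'M['F_2]_(t, n)) (b : F2vec n),
              affine_dim V t /\ affine_param V A b) with
  | left h =>
      let (t, h1) := constructive_indefinite_description _ h in
      let (A, h2) := constructive_indefinite_description _ h1 in
      let (b, _) := constructive_indefinite_description _ h2 in
      CC (fun x : {ffun 'I_4 -> F2vec t} => g ((\sum_(i < 4) x i) *m A + b))
  | right _ => 0%N
  end.

(* Main.v *)
Require Import Defs.
From HB Require Import structures.
From mathcomp Require Import all_boot all_order all_algebra.
Set Implicit Arguments. Unset Strict Implicit. Unset Printing Implicit Defensive.
From Stdlib Require Import ClassicalEpsilon.
Import GRing.Theory.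

Section Proto.
Variables (k : nat) (X X' : finType) (Y : Type).

Lemma prun_ext (p : proto k X Y) (x x' : 'I_k -> X) :
  (forall i, x i = x' i) -> prun p x = prun p x'.
Proof. by move=> e; elim: p => //= i m p0 IH0 p1 IH1; rewrite e IH0 IH1. Qed.

Lemma plen_ext (p : proto k X Y) (x x' : 'I_k -> X) :
  (forall i, x i = x' i) -> plen p x = plen p x'.
Proof. by move=> e; elim: p => //= i m p0 IH0 p1 IH1; rewrite e IH0 IH1. Qed.

Fixpoint pmap (phi : 'I_k -> X' -> X) (p : proto k X Y) : proto k X' Y :=
  match p with
  | PLeaf y => PLeaf _ _ y
  | PNode i m p0 p1 => PNode i (fun v => m (phi i v)) (pmap phi p0) (pmap phi p1)
  end.

Lemma prun_pmap phi p (y : 'I_k -> X') :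
  prun (pmap phi p) y = prun p (fun i => phi i (y i)).
Proof. by elim: p => //= i m p0 IH0 p1 IH1; rewrite IH0 IH1. Qed.

Lemma plen_pmap phi p (y : 'I_k -> X') :
  plen (pmap phi p) y = plen p (fun i => phi i (y i)).
Proof. by elim: p => //= i m p0 IH0 p1 IH1; rewrite IH0 IH1. Qed.

Lemma CC_le_reduce (G : {ffun 'I_k -> X} -> Y) (G' : {ffun 'I_k -> X'} -> Y)
  (phi : 'I_k -> X' -> X) d :
  (forall y, G' y = G [ffun i => phi i (y i)]) -> CC_le G d -> CC_le G' d.
Proof.
move=> eG [p [cp hp]]; exists (pmap phi p); split.
  move=> y; rewrite eG -cp prun_pmap; apply: prun_ext => i; by rewrite ffunE.
apply: leq_trans hp; apply/bigmax_leqP => y _.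
rewrite plen_pmap (plen_ext _ (x' := [ffun i => phi i (y i)])); last by move=> i; rewrite ffunE.
exact: leq_bigmax.
Qed.

Lemma CC_min (G : {ffun 'I_k -> X} -> Y) d : CC_le G d -> (CC G <= d)%N.
Proof.
move=> h; rewrite /CC; case: excluded_middle_informative => [e|ne].
  case: ex_minnP => m _ ; apply; rewrite /CC_le_b.
  by case: excluded_middle_informative.
exfalso; apply: ne; exists d; rewrite /CC_le_b; by case: excluded_middle_informative.
Qed.

Lemma CC_spec (G : {ffun 'I_k -> X} -> Y) d : CC_le G d -> CC_le G (CC G).
Proof.
move=> h; rewrite /CC; case: excluded_middle_informative => [e|ne].
  case: ex_minnP => m; rewrite /CC_le_b; by case: excluded_middle_informative.
exfalso; apply: ne; exists d; rewrite /CC_le_b; by case: excluded_middle_informative.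
Qed.

Definition consistent (x : 'I_k -> X) (ctx : seq ('I_k * X * bool)) :=
  all (fun q => (x q.1.1 == q.1.2) == q.2) ctx.

Fixpoint build (G : {ffun 'I_k -> X} -> Y) (y0 : Y) (qs : seq ('I_k * X))
   (ctx : seq ('I_k * X * bool)) : proto k X Y :=
  match qs with
  | [::] => PLeaf _ _ (if [pick x : {ffun 'I_k -> X} | consistent x ctx] is Some x
                      then G x else y0)
  | q :: qs' => PNode q.1 (fun v => v == q.2)
                  (build G y0 qs' ((q, false) :: ctx)) (build G y0 qs' ((q, true) :: ctx))
  end.

Lemma build_ok G y0 qs ctx (x : {ffun 'I_k -> X}) :
  consistent x ctx ->
  (forall i, (i, x i) \in qs \/ (i, x i, true) \in ctx) ->
  prun (build G y0 qs ctx) x = G x.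
Proof.
elim: qs ctx => [|q qs IH] ctx /= cx cov.
  case: pickP => [x' cx'|]; last by move/(_ x); rewrite cx.
  congr G; apply/ffunP => i.
  have [//|hin] := cov i.
  by move/allP: cx' => /(_ _ hin) /= /eqP/eqP.
case: ifP => hq; apply: IH.
- by apply/andP; split => //=; rewrite hq.
- move=> i; case: (cov i) => [|h]; last by right; rewrite in_cons h orbT.
  rewrite in_cons => /orP [/eqP <-|h]; last by left.
  by right; rewrite in_cons eqxx.
- by apply/andP; split => //=; rewrite hq.
- move=> i; case: (cov i) => [|h]; last by right; rewrite in_cons h orbT.
  rewrite in_cons => /orP [/eqP eq|h]; last by left.
  by move: hq; rewrite -eq /= eqxx.
Qed.

Lemma CC_exists (G : {ffun 'I_k -> X} -> Y) (y0 : Y) : exists d, CC_le G d.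
Proof.
exists (pcost (build G y0 (enum (@predT (prod (ordinal k) X))) [::])).
eexists; split; last exact: leqnn.
move=> x; apply: build_ok => // i; left; by rewrite mem_enum.
Qed.
End Proto.
Local Open Scope ring_scope.
Lemma param_exists n (V : {set F2vec n}) t :
  affine_dim V t -> exists (A : 'M['F_2]_(t, n)) b, affine_param V A b.
Proof.
move=> [a [S [-> <-]]].
pose A : 'M['F_2]_(\dim S, n) := \matrix_(i < \dim S) (vbasis S)`_i.
have mA : forall x : 'rV_(\dim S), x *m A = \sum_i x 0 i *: (vbasis S)`_i.
  by move=> x; rewrite mulmx_sum_row; apply: eq_bigr => i _; rewrite rowK.
exists A, a; split.
  move=> x y /addIr /eqP; rewrite -subr_eq0 -mulmxBl mA => /eqP h.
  have fr := basis_free (vbasisP S).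
  move/freeP: fr => /(_ _ h) h0; apply/rowP => j.
  have := h0 j; rewrite !mxE; exact: subr0_eq.
apply/setP => v; apply/imsetP/imsetP => -[x xS ->].
  exists (x *m A); last by rewrite addrC.
  rewrite mA; apply: memv_suml => i _; apply: memvZ; apply: vbasis_mem.
  by apply: mem_nth; rewrite size_tuple.
exists (\row_i coord (vbasis S) i x) => //.
rewrite addrC mA; congr (_ + _).
under eq_bigr do rewrite mxE; exact: coord_vbasis.
Qed.

Lemma reduce_main n (U W : {set 'rV['F_2]_n}) (f : 'rV['F_2]_n -> 'F_2)
  tW (AW : 'M['F_2]_(tW, n)) bW tU (AU : 'M['F_2]_(tU, n)) bU :
  affine_param W AW bW -> affine_param U AU bU -> W \subset U ->
  (CC (fun x : {ffun 'I_4 -> F2vec tW} => f ((\sum_(i < 4) x i) *m AW + bW)%R)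
   <= CC (fun x : {ffun 'I_4 -> F2vec tU} => f ((\sum_(i < 4) x i) *m AU + bU)%R))%N.
Proof.
move=> [_ imW] [_ imU] sWU.
have inU : forall y : F2vec tW, exists c : F2vec tU, c *m AU + bU = y *m AW + bW.
  move=> y; have : y *m AW + bW \in U.
    by apply: (subsetP sWU); rewrite -imW; apply/imsetP; exists y.
  by rewrite -imU => /imsetP [c _ ->]; exists c.
have [c hc] := inU 0; rewrite mul0mx add0r in hc.
have [cf hcf] := fin_all_exists (fun i : 'I_tW => inU (delta_mx 0 i)).
pose T : 'M['F_2]_(tW, tU) := \matrix_i (cf i - c).
have hT : T *m AU = AW.
  apply/row_matrixP => i; rewrite row_mul rowK mulmxBl (rowE i AW).
  have e1 : cf i *m AU = 'e_i *m AW + bW - bU by rewrite -hcf addrK.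
  have e2 : c *m AU = bW - bU by rewrite -hc addrK.
  by rewrite e1 e2 opprB addrA subrK addrK.
pose phi (i : 'I_4) (y : F2vec tW) := y *m T + (if i == 0 then c else 0).
apply: CC_min; apply: (CC_le_reduce (G := fun x : {ffun 'I_4 -> F2vec tU} => f ((\sum_(i < 4) x i) *m AU + bU)) (phi := phi)); last first.
  have [d hd] := CC_exists (fun x : {ffun 'I_4 -> F2vec tU} => f ((\sum_(i < 4) x i) *m AU + bU)) (0 : 'F_2).
  exact: CC_spec hd.
move=> y; congr f.
have -> : \sum_(i < 4) [ffun i => phi i (y i)] i = (\sum_(i < 4) y i) *m T + c.
  rewrite (eq_bigr (fun i => phi i (y i))); last by move=> i _; rewrite ffunE.
  rewrite big_split /= -mulmx_suml; congr (_ + _).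
  by rewrite big_ord_recl /= big1 ?addr0 // => i _.
by rewrite mulmxDl -mulmxA hT -addrA hc.
Qed.

Local Close Scope ring_scope.
Theorem lemma3p3 (n : nat) (U W : {set 'rV['F_2]_n}) (f : 'rV['F_2]_n -> 'F_2) :
  affine_subspace U -> affine_subspace W -> W \subset U ->
  (M W f <= M U f)%N.
Proof.
move=> [tU aU] _ sWU.
rewrite /M; case: excluded_middle_informative => [hW|//].
case: excluded_middle_informative => [hU|nU]; last first.
  exfalso; apply: nU; have [A [b hb]] := param_exists aU.
  by exists tU, A, b.
case: (constructive_indefinite_description _ hW) => t1 h1.
case: (constructive_indefinite_description _ h1) => A1 h2.
case: (constructive_indefinite_description _ h2) => b1 [_ p1].
case: (constructive_indefinite_description _ hU) => t2 h3.
case: (constructive_indefinite_description _ h3) => A2 h4.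
case: (constructive_indefinite_description _ h4) => b2 [_ p2].
exact: reduce_main p1 p2 sWU.
Qed.
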